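(* Let $\mathbf u$ be the infinite word over $\{0,1,2,3\}$ that is the fixed point starting with $0$ of the morphism $\varphi$ given by $\varphi(0)=0130$, $\varphi(1)=1021$, $\varphi(2)=102$, $\varphi(3)=013$. Let $\theta_1,\theta_2$ be the antimorphisms on $\{0,1,2,3\}^*$ defined on letters by $\theta_1: 0\mapsto 1, 1\mapsto 0, 2\mapsto 2, 3\mapsto 3$ and $\theta_2: 0\mapsto 0, 1\mapsto 1, 2\mapsto 3, 3\mapsto 2$. Then every nonempty bispecial factor $w$ of $\mathbf u$ satisfies $\theta_i(w)=w$ for some $i\in\{1,2\}$.
   Context: The fixed point starting with $0$ is the unique infinite word having $\varphi^n(0)$ as a prefix for every $n$. An antimorphism $\theta$ satisfies $\theta(vw)=\theta(w)\theta(v)$. A factor $w$ of $\mathbf u$ is right special if $wa,wb$ are factors of $\mathbf u$ for two distinct letters $a,b$, left special if $aw,bw$ are factors for two distinct letters $a,b$, and bispecial if it is both. *)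

(* Defs.v *)
From mathcomp Require Import all_boot.
Set Implicit Arguments. Unset Strict Implicit. Unset Printing Implicit Defensive.

Definition letter := 'I_4.
Definition L (n : nat) : letter := inord n.

Definition phi_letter (a : letter) : seq letter :=
  match val a with
  | 0 => [:: L 0; L 1; L 3; L 0]
  | 1 => [:: L 1; L 0; L 2; L 1]
  | 2 => [:: L 1; L 0; L 2]
  | _ => [:: L 0; L 1; L 3]
  end.

Definition phi (w : seq letter) : seq letter := flatten (map phi_letter w).

(* The fixed point u starting with 0: its n-th letter is the n-th letter of
   phi^(n+1)(0), which has length > n and is a prefix of all later iterates. *)
Definition u (n : nat) : letter := nth (L 0) (iter n.+1 phi [:: L 0]) n.

Definition factor (w : seq letter) : Prop :=
  exists i : nat, w = [seq u (i + k) | k <- iota 0 (size w)].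

Definition right_special (w : seq letter) : Prop :=
  exists a b : letter, a <> b /\ factor (rcons w a) /\ factor (rcons w b).
Definition left_special (w : seq letter) : Prop :=
  exists a b : letter, a <> b /\ factor (a :: w) /\ factor (b :: w).
Definition bispecial (w : seq letter) : Prop :=
  factor w /\ left_special w /\ right_special w.

Definition antimorph (f : letter -> letter) (w : seq letter) : seq letter :=
  rev (map f w).

Definition theta1_letter (a : letter) : letter :=
  match val a with 0 => L 1 | 1 => L 0 | 2 => L 2 | _ => L 3 end.
Definition theta2_letter (a : letter) : letter :=
  match val a with 0 => L 0 | 1 => L 1 | 2 => L 3 | _ => L 2 end.

Definition theta1 := antimorph theta1_letter.
Definition theta2 := antimorph theta2_letter.

(* Main.v *)
Require Import Defs.
From mathcomp Require Import all_boot zify.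
Set Implicit Arguments. Unset Strict Implicit. Unset Printing Implicit Defensive.

Lemma valL n : n < 4 -> nat_of_ord (L n) = n.
Proof. by move=> h; rewrite /L inordK. Qed.

Definition pn (a : nat) : seq nat :=
  match a with 0 => [::0;1;3;0] | 1 => [::1;0;2;1] | 2 => [::1;0;2] | _ => [::0;1;3] end.
Definition pnw (s : seq nat) := flatten (map pn s).

Lemma phiv (a : letter) : map (@nat_of_ord 4) (phi_letter a) = pn a.
Proof. rewrite /phi_letter. case: a => [[|[|[|[|n]]]] H] /=; rewrite ?valL //. Qed.

Definition V k := map (@nat_of_ord 4) (iter k phi [:: L 0]).
Lemma V0 : V 0 = [:: 0].
Proof. by rewrite /V /= valL. Qed.
Lemma VS k : V k.+1 = pnw (V k).
Proof.
rewrite /V iterS /phi /pnw; elim: (iter k phi [:: L 0]) => //= a s IH.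
by rewrite map_cat IH phiv.
Qed.
Lemma pnw_cat s t : pnw (s ++ t) = pnw s ++ pnw t.
Proof. by rewrite /pnw map_cat flatten_cat. Qed.
Lemma pnw_cons a s : pnw (a :: s) = pn a ++ pnw s.
Proof. by []. Qed.
Lemma size_pn a : 3 <= size (pn a) <= 4.
Proof. by case: a => [|[|[|[|n]]]]. Qed.
Lemma size_pnw s : 3 * size s <= size (pnw s).
Proof.
elim: s => //= a s IH; rewrite pnw_cons size_cat mulnS.
by apply: leq_add => //; case/andP: (size_pn a).
Qed.
Lemma V_prefix k : exists t, V k.+1 = V k ++ t.
Proof.
elim: k => [|k [t IH]]; first by exists [:: 1;3;0]; rewrite VS V0.
by exists (pnw t); rewrite {1}VS IH pnw_cat -VS -IH.
Qed.
Lemma V_prefix_le k k' : k <= k' -> exists t, V k' = V k ++ t.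
Proof.
elim: k' => [|k' IH].
  rewrite leqn0 => /eqP ->; exists [::]; by rewrite cats0.
rewrite leq_eqVlt => /orP [/eqP ->|].
  exists [::]; by rewrite cats0.
rewrite ltnS => /IH [t Ht]; case: (V_prefix k') => t' ->; exists (t ++ t').
by rewrite Ht catA.
Qed.
Lemma size_V k : k < size (V k).
Proof.
elim: k => [|k IH]; first by rewrite V0.
rewrite VS; apply: leq_trans (size_pnw _).
have h : 0 < size (V k) by apply: leq_ltn_trans IH.
lia.
Qed.

Definition c i := nat_of_ord (u i).
Lemma c_lt4 i : c i < 4.
Proof. exact: ltn_ord. Qed.

Lemma c_V k n : n < size (V k) -> c n = nth 0 (V k) n.
Proof.
move=> hn.
have hs : n < size (V n.+1) := ltn_trans (ltnSn n) (size_V n.+1).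
have e1 : c n = nth 0 (V n.+1) n.
  rewrite /c /u /V (nth_map (L 0)) //.
  have := size_V n.+1; rewrite /V size_map => h; exact: ltn_trans (ltnSn n) h.
rewrite e1; case: (leqP n.+1 k) => h.
  by case: (V_prefix_le h) => t ->; rewrite nth_cat hs.
have /V_prefix_le [t ->] : k <= n.+1 by apply: ltnW.
by rewrite nth_cat hn.
Qed.

Fixpoint pos j := if j is j'.+1 then pos j' + size (pn (c j')) else 0.

Lemma pos_V k j : j <= size (V k) -> pos j = size (pnw (take j (V k))).
Proof.
elim: j => [|j IH] h; first by rewrite take0.
rewrite /= IH ?(ltnW h) // (take_nth 0) // -cats1 pnw_cat size_cat.
by rewrite -c_V // /pnw /= cats0.
Qed.

Lemma Fix j r : r < size (pn (c j)) -> c (pos j + r) = nth 0 (pn (c j)) r.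
Proof.
move=> hr. have hj := size_V j.
have E : pnw (V j) = pnw (take j (V j)) ++ pn (c j) ++ pnw (drop j.+1 (V j)).
  by rewrite -{1}(cat_take_drop j (V j)) (drop_nth 0) // pnw_cat pnw_cons -c_V.
rewrite (pos_V (ltnW hj)) (c_V (k := j.+1)) VS E; last by rewrite !size_cat ltn_add2l ltn_addr.
by rewrite nth_cat ltnNge leq_addr /= addKn nth_cat hr.
Qed.

Definition bl a := size (pn a).
Lemma posS j : pos j.+1 = pos j + bl (c j). Proof. by []. Qed.
Lemma bl_ge a : 3 <= bl a. Proof. by case: a => [|[|[|[|n]]]]. Qed.
Lemma bl_le a : bl a <= 4. Proof. by case: a => [|[|[|[|n]]]]. Qed.
Lemma pos_ge j : 3 * j <= pos j.
Proof. elim: j => //= j IH; have := bl_ge (c j); rewrite /bl; lia. Qed.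
Lemma pos_mono j k : j <= k -> pos j <= pos k.
Proof.
elim: k => [|k IH]; first by rewrite leqn0 => /eqP ->.
rewrite leq_eqVlt => /orP [/eqP ->//|]; rewrite ltnS => /IH h /=; lia.
Qed.
Lemma pos_lt j k : j < k -> pos j < pos k.
Proof.
move=> h; apply: (@leq_trans (pos j.+1)); last exact: pos_mono.
have := bl_ge (c j); rewrite /= /bl; lia.
Qed.

Lemma coverp i : exists j r, i = pos j + r /\ r < bl (c j).
Proof.
elim: i => [|i [j [r [-> hr]]]]; first by exists 0, 0; split => //; have := bl_ge (c 0); lia.
case: (ltnP r.+1 (bl (c j))) => h.
  by exists j, r.+1; split => //; lia.
exists j.+1, 0; split; first by rewrite posS; lia.
have := bl_ge (c j.+1); lia.
Qed.

Definition al a b : bool :=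
  [|| (a==0)&&((b==1)||(b==2)), (a==1)&&((b==0)||(b==3)), (a==2)&&(b==1) | (a==3)&&(b==0)].

Lemma FixB j r : r < bl (c j) -> c (pos j + r) = nth 0 (pn (c j)) r.
Proof. exact: Fix. Qed.

Lemma adj i : al (c i) (c i.+1).
Proof.
elim/ltn_ind: i => i IH.
case: (coverp i.+1) => j [r [e hr]].
case: r e hr => [|r] e hr.
  case: j e hr => [|j] e hr; first by rewrite /= in e.
  have hj : j < i.
    have := pos_ge j; have := bl_ge (c j); rewrite posS in e; lia.
  have e1 : i = pos j + (bl (c j) - 1).
    move: e; rewrite posS addn0; have := bl_ge (c j); lia.
  have h1 : c i = c j.
    rewrite e1 FixB; last by have := bl_ge (c j); lia.
    by have := c_lt4 j; rewrite /bl; case: (c j) => [|[|[|[|?]]]].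
  have h2 : c i.+1 = nth 0 (pn (c j.+1)) 0 by rewrite e addn0 -FixB // addn0.
  rewrite h1 h2; have := IH j hj.
  have := c_lt4 j.+1; have := c_lt4 j.
  move: (c j) (c j.+1) => a b; rewrite /al.
  by case: a => [|[|[|[|?]]]]; case: b => [|[|[|[|?]]]].
have e1 : i = pos j + r by lia.
rewrite e e1 !FixB //; last by lia.
have := c_lt4 j; move: hr; rewrite /bl; case: (c j) => [|[|[|[|?]]]]; case: r e e1 => [|[|[|[|?]]]] //.
Qed.

Lemma nextB j t : t < 3 -> c (pos j + bl (c j) + t) = nth 0 (pn (c j.+1)) t.
Proof. by move=> h; rewrite -posS FixB //; have := bl_ge (c j.+1); lia. Qed.

Definition isA a := (a == 0) || (a == 3).
Definition w5 a := if isA a then [::0;1;3;0;1] else [::1;0;2;1;0].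

Lemma cls5 j t : t < 5 -> c (pos j + t) = nth 0 (w5 (c j)) t.
Proof.
move=> ht; case: (ltnP t (bl (c j))) => h.
  rewrite FixB //; move: h; have := c_lt4 j; rewrite /bl /w5.
  by case: (c j) => [|[|[|[|?]]]]; case: t ht => [|[|[|[|[|?]]]]].
have e : pos j + t = pos j + bl (c j) + (t - bl (c j)) by lia.
rewrite e nextB; last by have := bl_ge (c j); lia.
have := adj j; have := c_lt4 j.+1; move: h ht; have := c_lt4 j; rewrite /bl /w5 /al.
move: (c j) (c j.+1) => a b.
by case: a => [|[|[|[|?]]]]; case: b => [|[|[|[|?]]]]; clear e; case: t => [|[|[|[|[|?]]]]].
Qed.

Lemma five j : c (pos j + 5) = c j.
Proof.
have e : pos j + 5 = pos j + bl (c j) + (5 - bl (c j)) by have := bl_le (c j); lia.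
rewrite e nextB; last by have := bl_ge (c j); lia.
have := adj j; have := c_lt4 j.+1; have := c_lt4 j; rewrite /bl /al.
move: (c j) (c j.+1) => a b.
by case: a => [|[|[|[|?]]]]; case: b => [|[|[|[|?]]]].
Qed.

Lemma lastb j : c (pos j + (bl (c j) - 1)) = c j.
Proof.
rewrite FixB; last by have := bl_ge (c j); lia.
by have := c_lt4 j; rewrite /bl; case: (c j) => [|[|[|[|?]]]].
Qed.

Lemma marker i : 2 <= c i -> exists j, i = pos j + 2.
Proof.
case: (coverp i) => j [r [-> hr]]; rewrite FixB // => h.
exists j; congr (_ + _); move: h hr; have := c_lt4 j; rewrite /bl.
by case: (c j) => [|[|[|[|?]]]]; case: r => [|[|[|[|?]]]].
Qed.

Lemma startA j : c (pos j) = if isA (c j) then 0 else 1.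
Proof. by rewrite -(addn0 (pos j)) cls5 //; rewrite /w5; case: ifP. Qed.

Lemma c0 : c 0 = 0.
Proof. by rewrite (c_V (k:=0)) ?V0. Qed.

Lemma al_isA a b : a < 4 -> b < 4 -> al a b -> isA b = odd a.
Proof. by case: a => [|[|[|[|?]]]]; case: b => [|[|[|[|?]]]]. Qed.

Lemma pos_add j k : pos j + 3 * k <= pos (j + k).
Proof.
elim: k => [|k IH]; first by rewrite muln0 !addn0.
rewrite addnS posS; have := bl_ge (c (j + k)); lia.
Qed.

Lemma blockext (g : nat -> nat) (hg : forall a, a < 4 -> pn (g a) = map g (pn a))
  j1 j2 m : (forall k, k < m -> c (j1 + k) = g (c (j2 + k))) ->
  pos (j1 + m) = pos j1 + (pos (j2 + m) - pos j2) /\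
  forall r, r < pos (j2 + m) - pos j2 -> c (pos j1 + r) = g (c (pos j2 + r)).
Proof.
elim: m => [|m IH] h.
  by rewrite !addn0 subnn addn0; split => // r; rewrite ltn0.
have [e1 e2] : pos (j1 + m) = pos j1 + (pos (j2 + m) - pos j2) /\
  forall r, r < pos (j2 + m) - pos j2 -> c (pos j1 + r) = g (c (pos j2 + r)).
  by apply: IH => k hk; apply: h; apply: ltnW.
have hm := h m (ltnSn m).
have hb : bl (c (j1 + m)) = bl (c (j2 + m)) by rewrite /bl hm hg ?c_lt4 // size_map.
have m2 : pos j2 <= pos (j2 + m) by apply: pos_mono; apply: leq_addr.
split; first by rewrite !addnS !posS e1 hb; lia.
move=> r; rewrite addnS posS => hr.
case: (ltnP r (pos (j2 + m) - pos j2)) => h2; first exact: e2.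
set s := r - (pos (j2 + m) - pos j2).
have hs : s < bl (c (j2 + m)) by rewrite /s; lia.
have -> : pos j1 + r = pos (j1 + m) + s by rewrite e1 /s; lia.
have -> : pos j2 + r = pos (j2 + m) + s by rewrite /s; lia.
rewrite !FixB ?hb // hm hg ?c_lt4 // (nth_map 0) //.
Qed.

Lemma w5A j : isA (c j) -> forall t, t < 5 -> c (pos j + t) = nth 0 [::0;1;3;0;1] t.
Proof. by move=> h t ht; rewrite cls5 // /w5 h. Qed.

Lemma pref5 t : t < 5 -> c t = nth 0 [::0;1;3;0;1] t.
Proof. by move=> ht; have := w5A (j:=0); rewrite /= c0 => /(_ isT t ht). Qed.

Lemma bnd1 i1 : c i1 = 1 -> c i1.+1 = 0 -> c i1.+2 = 1 ->
  exists j, i1.+1 = pos j.+1 /\ c j = 1.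
Proof.
case: (coverp i1) => j [r [-> hr]] h0 h1 h2.
move: h0; rewrite FixB // => h0.
case: (ltnP r 3) => hr3.
  have e1 : c (pos j + r).+1 = nth 0 (w5 (c j)) r.+1 by rewrite -addnS cls5 //; lia.
  have e2 : c (pos j + r).+2 = nth 0 (w5 (c j)) r.+2 by rewrite -!addnS cls5 //; lia.
  rewrite e1 in h1; rewrite e2 in h2; exfalso.
  move: h0 h1 h2 hr3; have := c_lt4 j; rewrite /w5 /isA.
  by case: (c j) => [|[|[|[|?]]]]; clear e1 e2 hr; case: r => [|[|[|?]]].
have r3 : r = 3 by move: hr; have := bl_le (c j); lia.
have cj : c j = 1.
  by move: h0 hr; rewrite r3 /bl; have := c_lt4 j; case: (c j) => [|[|[|[|?]]]].
by exists j; split => //; rewrite posS cj r3 /bl /=; lia.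
Qed.

Lemma m3 i2 : c i2 = 3 -> exists j, i2 = pos j + 2 /\ isA (c j).
Proof.
move=> h; case: (@marker i2); first by rewrite h.
move=> j e; exists j; split => //; move: h; rewrite e FixB; last by have := bl_ge (c j); lia.
by have := c_lt4 j; rewrite /isA; case: (c j) => [|[|[|[|?]]]].
Qed.

Lemma after3 i2 : c i2 = 3 -> c i2.+1 = 0 /\ c i2.+2 = 1.
Proof.
case/m3 => j [-> hA].
by rewrite -!addnS !w5A.
Qed.

Lemma bnd2 i2 : c i2 = 3 -> c i2.+3 = 3 -> exists j, i2.+1 = pos j.+1 /\ c j = 3.
Proof.
move=> h; case/m3: (h) => j [e hA].
have : c i2.+3 = c j by rewrite e -!addnS five.
move=> -> cj; exists j; split => //; rewrite posS e cj /bl /=; lia.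
Qed.

Lemma LS0 n : forall i1 i2, c i1 = 1 -> c i2 = 3 ->
  (forall k, k < n -> c (i1.+1 + k) = c (i2.+1 + k)) ->
  (0 < n -> c i1.+1 = 0) -> forall k, k < n -> c (i1.+1 + k) = c k.
Proof.
elim/ltn_ind: n => n IH i1 i2 h1 h3 heq h0 k hk.
case: n IH heq h0 hk => [|n] IH heq h0 hk; first by [].
have c10 : c i1.+1 = 0 by apply: h0.
case: n IH heq h0 hk => [|n] IH heq h0 hk.
  by move: hk; rewrite ltnS leqn0 => /eqP ->; rewrite addn0 c10 c0.
have [c21 c22] := after3 h3.
have c12 : c i1.+2 = 1 by have := heq 1 isT; rewrite !addn1 c22.
have [j1 [e1 cj1]] := bnd1 h1 c10 c12.
have Aj1 : isA (c j1.+1).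
  by rewrite (al_isA (c_lt4 _) (c_lt4 _) (adj j1)) cj1.
case: (ltnP k 5) => hk5.
  by rewrite e1 w5A // pref5.
have c13 : c i1.+3 = 3.
  by have := w5A Aj1 (t:=2) isT; rewrite -e1 addn2.
have c23 : c i2.+3 = 3 by have := heq 2; rewrite !addn2 c13 => <- //; lia.
have [j2 [e2 cj2]] := bnd2 h3 c23.
have cj20 : c j2.+1 = 0.
  by have := adj j2; rewrite cj2 /al; have := c_lt4 j2.+1; case: (c j2.+1) => [|[|[|[|?]]]].
have exm : exists m, n.+2 < pos (j1.+1 + m) - pos j1.+1 + 6.
  by exists n.+2; have := pos_add j1.+1 n.+2; lia.
case: (ex_minnP exm) => m hm1 hmin.
have hm2 : forall k', k' < m -> pos (j1.+1 + k') - pos j1.+1 + 6 <= n.+2.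
  move=> k' hk'; rewrite leqNgt; apply/negP => /hmin; lia.
have idg : forall a, a < 4 -> pn (id a) = map id (pn a) by move=> a _; rewrite map_id.
have hA : forall k', k' < m -> c (j1.+1 + k') = c (j2.+1 + k').
  suff H : forall q, q <= m -> forall k', k' < q -> c (j1.+1 + k') = c (j2.+1 + k').
    by move=> k' hk'; exact: H m (leqnn m) k' hk'.
  elim=> [|q IHq] hq k' hk'; first by rewrite ltn0 in hk'.
  have IHq' := IHq (ltnW hq).
  rewrite ltnS leq_eqVlt in hk'; case/orP: hk' => [/eqP ->|]; last exact: IHq'.
  have [ep _] := blockext idg (j1 := j1.+1) (j2 := j2.+1) (m := q) IHq'.
  have hq2 := hm2 q hq.
  have mo1 : pos j1.+1 <= pos (j1.+1 + q) by apply: pos_mono; apply: leq_addr.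
  have mo2 : pos j2.+1 <= pos (j2.+1 + q) by apply: pos_mono; apply: leq_addr.
  rewrite -five -(five (j2.+1 + q)).
  have -> : pos (j1.+1 + q) + 5 = i1.+1 + (pos (j1.+1+q) - pos j1.+1 + 5) by rewrite e1; lia.
  have -> : pos (j2.+1 + q) + 5 = i2.+1 + (pos (j1.+1+q) - pos j1.+1 + 5) by rewrite ep e2; lia.
  apply: heq; lia.
have hmn : m < n.+2.
  case E: m => [|m'] //; have := hm2 m'; rewrite E => /(_ (ltnSn m')).
  have := pos_add j1.+1 m'; lia.
have hm0 : 0 < m -> c j1.+1 = 0.
  by move=> hm0; have := hA 0 hm0; rewrite !addn0 cj20.
have hv := IH m hmn j1 j2 cj1 cj2 hA hm0.
have [ep0 eb] := blockext idg (j1 := j1.+1) (j2 := 0) (m := m) hv.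
have p0 : pos 0 = 0 by [].
rewrite p0 subn0 !add0n in ep0 eb.
have mo1 : pos j1.+1 <= pos (j1.+1 + m) by apply: pos_mono; apply: leq_addr.
rewrite e1; case: (ltnP k (pos m)) => hkm; first by rewrite eb.
have ht : k - pos m < 5 by lia.
have -> : pos j1.+1 + k = pos (j1.+1 + m) + (k - pos m) by rewrite ep0; lia.
have -> : c k = c (pos m + (k - pos m)) by congr c; lia.
rewrite !cls5 //; congr nth; rewrite /w5.
have -> : isA (c (j1.+1 + m)) = isA (c m); last by [].
case: m hm1 hmin hm2 hA hmn hv ep0 eb mo1 hkm ht hm0 => [|m'] hm1 hmin hm2 hA hmn hv ep0 eb mo1 hkm ht hm0.
  by rewrite addn0 Aj1 c0.
rewrite addnS (al_isA (c_lt4 _) (c_lt4 _) (adj _)) (al_isA (c_lt4 _) (c_lt4 _) (adj m')).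
by rewrite hv.
Qed.

Definition sg a := match a with 0 => 1 | 1 => 0 | 2 => 3 | 3 => 2 | _ => a end.
Definition t2 a := match a with 2 => 3 | 3 => 2 | _ => a end.

Lemma sg_pn a : a < 4 -> pn (sg a) = map sg (pn a).
Proof. by case: a => [|[|[|[|?]]]]. Qed.

Lemma sig_pref M : exists i, forall t, t < M -> c (i + t) = sg (c t).
Proof.
suff H : forall k, exists M' i, k < M' /\ forall t, t < M' -> c (i + t) = sg (c t).
  case: (H M) => M' [i [hM hi]]; exists i => t ht; apply: hi; lia.
elim=> [|k [M' [i [hk hi]]]].
  exists 1, 1; split => // t; rewrite ltnS leqn0 => /eqP ->.
  by rewrite addn0 pref5 // c0.
have [_ eb] := blockext sg_pn (j1 := i) (j2 := 0) (m := M') (fun k h => hi k h).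
exists (pos M'), (pos i); split; first by have := pos_ge M'; lia.
move=> t ht; have := eb t; rewrite add0n subn0 /= add0n; exact.
Qed.

Definition mk n := map c (iota 0 n).
Lemma mk_add a b : mk (a + b) = mk a ++ map c (iota a b).
Proof. by rewrite /mk iotaD map_cat. Qed.

Lemma blockseq j : map c (iota (pos j) (bl (c j))) = pn (c j).
Proof.
apply: (@eq_from_nth _ 0); first by rewrite size_map size_iota.
move=> r; rewrite size_map size_iota => hr.
by rewrite (nth_map 0) ?size_iota // nth_iota // FixB.
Qed.

Lemma five_seq j : map c (iota (pos j) 5) = w5 (c j).
Proof.
apply: (@eq_from_nth _ 0); first by rewrite size_map size_iota /w5; case: ifP.
move=> r; rewrite size_map size_iota => hr.
by rewrite (nth_map 0) ?size_iota // nth_iota // cls5.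
Qed.

Lemma pnw_mk n : pnw (mk n) = mk (pos n).
Proof.
elim: n => [|n IH]; first by [].
by rewrite -addn1 mk_add pnw_cat IH addn1 posS mk_add blockseq /pnw /= cats0.
Qed.

Definition Cc a := if (a==0)||(a==2) then [::0;1;3;0;1] else [::1;0;2;1;0].
Definition Dd b := if isA b then [::1;0;2;1;0] else [::0;1;3;0;1].
Definition th2 s := rev (map t2 s).

Lemma th2_cat s t : th2 (s ++ t) = th2 t ++ th2 s.
Proof. by rewrite /th2 map_cat rev_cat. Qed.

Lemma comm a s : path al a s -> all (fun x => x < 4) (a :: s) ->
   Cc (last a s) ++ th2 (pnw (a :: s)) = pnw (th2 (a :: s)) ++ Dd a.
Proof.
elim: s a => [|b s IH] a.
  by move=> _ /=; rewrite andbT; case: a => [|[|[|[|?]]]].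
move=> /= /andP [hab hp] /andP [ha hb].
rewrite pnw_cons th2_cat catA IH //.
have -> : th2 [:: a, b & s] = th2 (b :: s) ++ [:: t2 a].
  by rewrite -(cat1s a) th2_cat.
have key : Dd b ++ th2 (pn a) = pn (t2 a) ++ Dd a.
  case/andP: hb => hb _; move: hab ha hb; clear IH hp; rewrite /al.
  by case: a => [|[|[|[|?]]]]; case: b => [|[|[|[|?]]]].
have e : pnw [:: t2 a] = pn (t2 a) by rewrite /pnw /= cats0.
by rewrite pnw_cat e -!catA key.
Qed.

Lemma path_mk i n : path al (c i) (map c (iota i.+1 n)).
Proof.
elim: n i => [|n IH] i //=.
by rewrite adj IH.
Qed.

Lemma last_iota m n : last m (iota m.+1 n) = m + n.
Proof. by elim: n m => [|n IH] m /=; [rewrite addn0 | rewrite IH addnS]. Qed.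

Lemma all_mk n : all (fun x => x < 4) (mk n).
Proof. by apply/allP => x /mapP [y _ ->]; apply: c_lt4. Qed.

Definition pal2 p := 0 < p /\ c p.-1 = 0 /\ th2 (mk p) = mk p.

Lemma pal2_1 : pal2 1.
Proof. by rewrite /pal2 /mk /= c0. Qed.

Lemma pal2_step p : pal2 p -> pal2 (pos p + 5).
Proof.
case=> hp [hl hpal].
have cp : isA (c p) = false.
  have := adj p.-1; rewrite prednK // hl /al /isA.
  by have := c_lt4 p; case: (c p) => [|[|[|[|?]]]].
have e5 : map c (iota (pos p) 5) = [:: 1;0;2;1;0] by rewrite five_seq /w5 cp.
have hmk : mk (pos p + 5) = pnw (mk p) ++ [:: 1;0;2;1;0] by rewrite mk_add e5 pnw_mk.
split; first by rewrite addnS.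
split.
  have -> : (pos p + 5).-1 = pos p + 4 by rewrite addnS.
  by rewrite cls5 // /w5 cp.
have hm : mk p = c 0 :: map c (iota 1 p.-1) by rewrite /mk -{1}(prednK hp).
have hc := comm (a := c 0) (s := map c (iota 1 p.-1)) (path_mk 0 p.-1).
rewrite -hm all_mk hm last_map last_iota add0n -hm hpal c0 /= in hc.
rewrite hmk th2_cat.
rewrite hl in hc; exact: hc isT.
Qed.

Lemma pal2_big k : exists p, k <= p /\ pal2 p.
Proof.
elim: k => [|k [p [hk hp]]]; first by exists 1; split => //; exact: pal2_1.
exists (pos p + 5); split; [have := pos_ge p; lia | exact: pal2_step].
Qed.

Lemma pal2_pt p : pal2 p -> forall t, t < p -> c t = t2 (c (p - t.+1)).
Proof.
case=> _ [_ h] t ht; have := congr1 (fun s => nth 0 s t) h.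
rewrite /th2 /mk nth_rev ?size_map ?size_iota //.
rewrite (nth_map 0) ?size_map ?size_iota; last by lia.
rewrite (nth_map 0) ?size_iota //.
rewrite (nth_map 0) ?size_iota; last by lia.
have hs : p - t.+1 < p by lia.
rewrite !nth_iota // => ->.
lia.
Qed.

Lemma t2K a : a < 4 -> t2 (t2 a) = a.
Proof. by case: a => [|[|[|[|?]]]]. Qed.

Lemma th2_close i N : exists i', forall t, t < N -> c (i' + t) = t2 (c (i + (N - t.+1))).
Proof.
case: (pal2_big (i + N)) => p [hp pp].
exists (p - (i + N)) => t ht.
rewrite (pal2_pt pp); last by lia.
by congr (t2 (c _)); lia.
Qed.

Lemma sgK a : a < 4 -> sg (sg a) = a.
Proof. by case: a => [|[|[|[|?]]]]. Qed.
Lemma sg_lt4 a : a < 4 -> sg a < 4.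
Proof. by case: a => [|[|[|[|?]]]]. Qed.
Lemma t2_lt4 a : a < 4 -> t2 a < 4.
Proof. by case: a => [|[|[|[|?]]]]. Qed.

Lemma occ w : factor w -> exists i, forall k, k < size w ->
  nat_of_ord (nth (L 0) w k) = c (i + k).
Proof.
case=> i e; exists i => k hk; rewrite e (nth_map 0) ?size_iota //.
by rewrite nth_iota // add0n.
Qed.

Lemma LS0' n i1 i2 (y : nat -> nat) : c i1 = 1 -> c i2 = 3 ->
  (forall k, k < n -> c (i1.+1 + k) = y k) -> (forall k, k < n -> c (i2.+1 + k) = y k) ->
  forall k, k < n -> y k = c k.
Proof.
move=> h1 h3 e1 e2 k hk.
have heq : forall k, k < n -> c (i1.+1 + k) = c (i2.+1 + k) by move=> k' hk'; rewrite e1 ?e2.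
have h0 : 0 < n -> c i1.+1 = 0.
  move=> hn; have e : c i1.+1 = c i2.+1 by rewrite -(addn0 i1.+1) -(addn0 i2.+1) e1 ?e2.
  have := adj i2; rewrite h3 e /al; have := c_lt4 i2.+1; case: (c i2.+1) => [|[|[|[|?]]]] //.
by rewrite -e1 // (LS0 h1 h3 heq h0).
Qed.

Lemma LSsg n i1 i2 (y : nat -> nat) : c i1 = 0 -> c i2 = 2 ->
  (forall k, k < n -> c (i1.+1 + k) = y k) -> (forall k, k < n -> c (i2.+1 + k) = y k) ->
  forall k, k < n -> y k = sg (c k).
Proof.
move=> h1 h2 e1 e2 k hk.
case: (sig_pref (i1 + i2 + n + 2)) => j hj.
have g1 : c (j + i1) = 1 by rewrite hj ?h1 //; lia.
have g2 : c (j + i2) = 3 by rewrite hj ?h2 //; lia.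
have E : forall i, (forall k, k < n -> c (i.+1 + k) = y k) -> i <= i1 + i2 ->
   forall k, k < n -> c ((j + i).+1 + k) = sg (y k).
  move=> i e hi k' hk'; rewrite -e // -hj; last by lia.
  by congr c; lia.
have := LS0' g1 g2 (E i1 e1 (leq_addr _ _)) (E i2 e2 (leq_addl _ _)) hk.
move=> <-; rewrite sgK // -e1 //; exact: c_lt4.
Qed.

Lemma LSg n (y : nat -> nat) i i' : c i <> c i' ->
  (forall k, k < n -> c (i.+1 + k) = y k) -> (forall k, k < n -> c (i'.+1 + k) = y k) ->
  0 < n -> (forall k, k < n -> y k = c k) \/ (forall k, k < n -> y k = sg (c k)).
Proof.
move=> hne e1 e2 hn.
have a1 := adj i; have a2 := adj i'.
have f1 : c i.+1 = y 0 by rewrite -(addn0 i.+1) e1.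
have f2 : c i'.+1 = y 0 by rewrite -(addn0 i'.+1) e2.
rewrite f1 in a1; rewrite f2 in a2.
have hy0 : y 0 < 4 by rewrite -f1 c_lt4.
move: a1 a2; rewrite /al.
have := c_lt4 i; have := c_lt4 i'.
case Ei: (c i) hne => [|[|[|[|?]]]] hne //; case Ei': (c i') hne => [|[|[|[|?]]]] hne //;
  case Ey: (y 0) hy0 => [|[|[|[|?]]]] //= _ _ _ _ _.
- by right; apply: (LSsg Ei Ei').
- by left; apply: (LS0' Ei Ei').
- by right; apply: (LSsg Ei' Ei).
- by left; apply: (LS0' Ei' Ei).
Qed.

Lemma th_eq (f : letter -> letter) (g : nat -> nat)
  (hf : forall a, nat_of_ord (f a) = g (nat_of_ord a)) w :
  (forall k, k < size w -> g (nat_of_ord (nth (L 0) w (size w - k.+1))) = nat_of_ord (nth (L 0) w k)) ->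
  antimorph f w = w.
Proof.
move=> h; apply: (@eq_from_nth _ (L 0)); first by rewrite size_rev size_map.
move=> k; rewrite size_rev size_map => hk; apply: val_inj => /=.
rewrite nth_rev ?size_map // (nth_map (L 0)) ?size_map; last by lia.
by rewrite hf h.
Qed.

Lemma th1v a : nat_of_ord (theta1_letter a) = sg (t2 (nat_of_ord a)).
Proof. by rewrite /theta1_letter; case: a => [[|[|[|[|?]]]] H] /=; rewrite ?valL. Qed.
Lemma th2v a : nat_of_ord (theta2_letter a) = t2 (nat_of_ord a).
Proof. by rewrite /theta2_letter; case: a => [[|[|[|[|?]]]] H] /=; rewrite ?valL. Qed.

Lemma t2_inj a b : a < 4 -> b < 4 -> t2 a = t2 b -> a = b.
Proof. by case: a => [|[|[|[|?]]]]; case: b => [|[|[|[|?]]]]. Qed.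

Theorem corollary22 (w : seq letter) :
  w <> [::] -> bispecial w -> theta1 w = w \/ theta2 w = w.
Proof.
move=> hw [_ [[a [b [hab [ha hb]]]] [a' [b' [hab' [ha' hb']]]]]].
set n := size w.
have hn : 0 < n by rewrite /n; move: hw; case: (w).
set y := fun k => nat_of_ord (nth (L 0) w k).
have hy4 : forall k, y k < 4 by move=> k; exact: ltn_ord.
have vne : forall x z : letter, x <> z -> nat_of_ord x <> nat_of_ord z.
  by move=> x z hxz e; apply: hxz; apply: val_inj.
case: (occ ha) => i hi; case: (occ hb) => i' hi'.
have ci : nat_of_ord a = c i by rewrite -(addn0 i) -hi.
have ci' : nat_of_ord b = c i' by rewrite -(addn0 i') -hi'.
have ei : forall k, k < n -> c (i.+1 + k) = y k.
  by move=> k hk; rewrite addSnnS -hi.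
have ei' : forall k, k < n -> c (i'.+1 + k) = y k.
  by move=> k hk; rewrite addSnnS -hi'.
have hne : c i <> c i' by rewrite -ci -ci'; apply: vne.
have X := LSg hne ei ei' hn.
case: (occ ha') => j hj; case: (occ hb') => j' hj'.
have rj : nat_of_ord a' = c (j + n).
  by rewrite -hj ?size_rcons // nth_rcons ltnn eqxx.
have rj' : nat_of_ord b' = c (j' + n).
  by rewrite -hj' ?size_rcons // nth_rcons ltnn eqxx.
have yj : forall k, k < n -> y k = c (j + k).
  by move=> k hk; rewrite -hj ?size_rcons ?(ltn_trans hk) // nth_rcons hk.
have yj' : forall k, k < n -> y k = c (j' + k).
  by move=> k hk; rewrite -hj' ?size_rcons ?(ltn_trans hk) // nth_rcons hk.
case: (th2_close j n.+1) => l hl; case: (th2_close j' n.+1) => l' hl'.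
set z := fun k => t2 (y (n - k.+1)).
have el : forall k, k < n -> c (l.+1 + k) = z k.
  move=> k hk; rewrite addSnnS hl //; rewrite /z yj; last by lia.
  by congr (t2 (c _)); lia.
have el' : forall k, k < n -> c (l'.+1 + k) = z k.
  move=> k hk; rewrite addSnnS hl' //; rewrite /z yj'; last by lia.
  by congr (t2 (c _)); lia.
have lne : c l <> c l'.
  rewrite -(addn0 l) -(addn0 l') hl // hl' // !subn1 /= -rj -rj' => /t2_inj.
  by move=> h; apply: (vne _ _ hab'); apply: h; apply: ltn_ord.
have Y := LSg lne el el' hn.
rewrite /theta1 /theta2.
case: X => X; case: Y => Y.
- right; apply: (th_eq th2v) => k hk.
  by move: (Y k hk) (X k hk); rewrite /z /y /n => -> ->.
- left; apply: (@th_eq _ (fun x => sg (t2 x)) th1v) => k hk.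
  by move: (Y k hk) (X k hk); rewrite /z /y /n => -> ->; rewrite sgK // c_lt4.
- left; apply: (@th_eq _ (fun x => sg (t2 x)) th1v) => k hk.
  by move: (Y k hk) (X k hk); rewrite /z /y /n => -> ->.
- right; apply: (th_eq th2v) => k hk.
  by move: (Y k hk) (X k hk); rewrite /z /y /n => -> ->.
Qed.
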